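(* The set $\{[A]\in\mathrm{MALG}: \Phi(A) \text{ is a complete } \boldsymbol{\Pi}^0_3 \text{ set}\}$ is comeager in $\mathrm{MALG}$.
   Context: $2^\omega$ is the Cantor space; $N_s=\{x: s\subset x\}$; $\mu$ the coin-tossing measure with $\mu(N_s)=2^{-\mathrm{lh}(s)}$. For measurable $A$, $\Phi(A)=\{x: \lim_n\mu(A\cap N_{x\restriction n})/\mu(N_{x\restriction n})=1\}$; $\Phi(A)$ depends only on the class $[A]$. $\mathrm{MALG}$ is the set of classes $[A]$ of measurable sets modulo null sets, with the Polish metric $\delta([A],[B])=\mu(A\triangle B)$. A set is complete $\boldsymbol{\Pi}^0_3$ if it is $F_{\sigma\delta}$ and every $F_{\sigma\delta}$ subset of $2^\omega$ is a continuous preimage of it (equivalently it is $F_{\sigma\delta}$ but not $G_{\delta\sigma}$). *)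

(* Defs.v *)
From Stdlib Require Import Reals List.
From Coquelicot Require Import Coquelicot.
Open Scope R_scope.

Definition cantor := nat -> bool.

Definition prefix (x : cantor) (n : nat) : list bool := List.map x (List.seq 0 n).

Definition N (s : list bool) (x : cantor) : Prop := prefix x (length s) = s.

Definition cover_sums (A : cantor -> Prop) (r : R) : Prop :=
  exists s : nat -> list bool,
    (forall x, A x -> exists k, N (s k) x) /\
    is_series (fun k => (/ 2) ^ length (s k)) r.

(** Outer measure induced by mu(N_s) = 2^{-lh(s)}; on measurable sets it is
    the coin-tossing measure mu. *)
Definition mu (A : cantor -> Prop) : R := real (Glb_Rbar (cover_sums A)).

Definition measurable (A : cantor -> Prop) : Prop :=
  forall E : cantor -> Prop,
    mu E = mu (fun x => E x /\ A x) + mu (fun x => E x /\ ~ A x).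

Definition Phi (A : cantor -> Prop) (x : cantor) : Prop :=
  is_lim_seq (fun n => mu (fun y => A y /\ N (prefix x n) y) / mu (N (prefix x n))) 1.

Definition open_set (U : cantor -> Prop) : Prop :=
  forall x, U x -> exists n, forall y, N (prefix x n) y -> U y.
Definition closed_set (F : cantor -> Prop) : Prop := open_set (fun x => ~ F x).

Definition Fsigmadelta (B : cantor -> Prop) : Prop :=
  exists F : nat -> nat -> cantor -> Prop,
    (forall m k, closed_set (F m k)) /\
    (forall x, B x <-> forall m, exists k, F m k x).

Definition continuous_map (f : cantor -> cantor) : Prop :=
  forall x n, exists m, forall y, N (prefix x m) y -> f y n = f x n.

Definition complete_Pi03 (C : cantor -> Prop) : Prop :=
  Fsigmadelta C /\
  forall B, Fsigmadelta B ->
    exists f, continuous_map f /\ forall x, B x <-> C (f x).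

(** MALG, presented as the pseudometric space of measurable sets with
    delta(A,B) = mu(A triangle B); its metric quotient is MALG. *)
Definition MALGpt := { A : cantor -> Prop | measurable A }.

Definition delta (a b : MALGpt) : R :=
  mu (fun x => (proj1_sig a x /\ ~ proj1_sig b x) \/ (proj1_sig b x /\ ~ proj1_sig a x)).

Definition malg_open (O : MALGpt -> Prop) : Prop :=
  forall a, O a -> exists eps, 0 < eps /\ forall b, delta a b < eps -> O b.

Definition malg_dense (D : MALGpt -> Prop) : Prop :=
  forall a eps, 0 < eps -> exists b, D b /\ delta a b < eps.

Definition malg_comeager (S : MALGpt -> Prop) : Prop :=
  exists D : nat -> MALGpt -> Prop,
    (forall k, malg_open (D k) /\ malg_dense (D k)) /\
    (forall a, (forall k, D k a) -> S a).

(* Main.v *)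
Require Import Defs.
From Stdlib Require Import Reals List.
From Coquelicot Require Import Coquelicot.
From Stdlib Require Import Lra Lia.
From Stdlib Require Import ClassicalEpsilon Classical FunctionalExtensionality PropExtensionality.
Open Scope R_scope.
Notation Nb := Defs.N.

Lemma ser_nonneg_ge_partial (a : nat -> R) l N :
  (forall n, 0 <= a n) -> is_series a l -> sum_f_R0 a N <= l.
Proof.
  intros H Hs. apply sum_incr; auto. apply is_series_Reals in Hs. exact Hs.
Qed.

Lemma ser_nonneg (a : nat -> R) l : (forall n, 0 <= a n) -> is_series a l -> 0 <= l.
Proof.
  intros H Hs. apply Rle_trans with (sum_f_R0 a 0). simpl. apply H.
  apply ser_nonneg_ge_partial; auto.
Qed.

Lemma ser_compare (a b : nat -> R) lb :
  (forall n, 0 <= a n <= b n) -> is_series b lb ->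
  exists la, is_series a la /\ la <= lb.
Proof.
  intros H Hb.
  assert (Eb : ex_series b) by (exists lb; auto).
  assert (Ea : ex_series a).
  { apply (@ex_series_le R_AbsRing R_CompleteNormedModule a b); auto. intros n. change (norm (a n)) with (Rabs (a n)). rewrite Rabs_pos_eq; apply H. }
  exists (Series a). split. apply Series_correct; auto.
  rewrite <- (is_series_unique b lb Hb). apply Series_le; auto.
Qed.

Lemma ser_unique (a : nat -> R) l1 l2 : is_series a l1 -> is_series a l2 -> l1 = l2.
Proof. intros H1 H2. rewrite <- (is_series_unique _ _ H1). apply is_series_unique; auto. Qed.

Lemma sum_f_R0_plus (a b : nat -> R) n : sum_f_R0 (fun k => a k + b k) n = sum_f_R0 a n + sum_f_R0 b n.
Proof. induction n; simpl; lra. Qed.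

Definition ileave {A} (a b : nat -> A) (k : nat) : A :=
  if Nat.even k then a (Nat.div2 k) else b (Nat.div2 k).

Lemma ileave_sum_odd (a b : nat -> R) n :
  sum_f_R0 (ileave a b) (S (2*n)) = sum_f_R0 a n + sum_f_R0 b n.
Proof.
  induction n.
  - simpl. unfold ileave. simpl. lra.
  - replace (S (2 * S n)) with (S (S (S (2*n)))) by lia.
    change (sum_f_R0 (ileave a b) (S (S (S (2*n))))) with
      (sum_f_R0 (ileave a b) (S (2*n)) + ileave a b (S (S (2*n))) + ileave a b (S (S (S (2*n))))).
    rewrite IHn. unfold ileave.
    replace (S (S (2*n))) with (2 * S n)%nat by lia.
    rewrite Nat.even_succ, Nat.odd_mul, Nat.even_mul. simpl Nat.even. simpl orb. simpl andb. cbv iota.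
    rewrite Nat.div2_succ_double. rewrite Nat.div2_double. simpl. lra.
Qed.

Lemma ileave_series (a b : nat -> R) la lb :
  (forall n, 0 <= a n) -> (forall n, 0 <= b n) ->
  is_series a la -> is_series b lb -> is_series (ileave a b) (la + lb).
Proof.
  intros Ha Hb Sa Sb.
  apply is_series_Reals. apply is_series_Reals in Sa. apply is_series_Reals in Sb.
  intros eps Heps.
  destruct (Sa (eps/2)) as [Na HNa]; [lra|].
  destruct (Sb (eps/2)) as [Nb HNb]; [lra|].
  exists (S (2 * (S (Na + Nb)))). intros m Hm.
  set (n := Nat.div2 m).
  assert (Hn : (Na + Nb < n)%nat).
  { unfold n. pose proof (Nat.div2_odd m). destruct (Nat.odd m); simpl in *; lia. }
  assert (mono : forall p q, (p <= q)%nat -> sum_f_R0 (ileave a b) p <= sum_f_R0 (ileave a b) q).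
  { intros p q Hpq. induction Hpq. lra. simpl. apply Rle_trans with (1 := IHHpq).
    assert (0 <= ileave a b (S m0)) by (unfold ileave; destruct Nat.even; auto). lra. }
  assert (lo : sum_f_R0 (ileave a b) (S (2 * (n-1))) <= sum_f_R0 (ileave a b) m).
  { apply mono. unfold n. pose proof (Nat.div2_odd m). destruct (Nat.odd m); simpl in *; lia. }
  assert (hi : sum_f_R0 (ileave a b) m <= sum_f_R0 (ileave a b) (S (2 * n))).
  { apply mono. unfold n. pose proof (Nat.div2_odd m). destruct (Nat.odd m); simpl in *; lia. }
  rewrite ileave_sum_odd in lo, hi.
  assert (A1 := HNa n ltac:(lia)). assert (A2 := HNa (n-1)%nat ltac:(lia)).
  assert (B1 := HNb n ltac:(lia)). assert (B2 := HNb (n-1)%nat ltac:(lia)).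
  unfold Rdist, R_dist in *.
  apply Rabs_def2 in A1, A2, B1, B2. apply Rabs_def1; lra.
Qed.

Definition h (n : nat) : R := (/2)^n.
Lemma h_pos n : 0 < h n.
Proof. unfold h. apply pow_lt. lra. Qed.
Lemma h_S n : h (S n) = h n / 2.
Proof. unfold h. simpl. lra. Qed.
Lemma h_0 : h 0 = 1. Proof. reflexivity. Qed.
Lemma h_le1 n : h n <= 1.
Proof. induction n. rewrite h_0; lra. rewrite h_S. pose proof (h_pos n). lra. Qed.
Lemma h_mono m n : (m <= n)%nat -> h n <= h m.
Proof. induction 1. lra. rewrite h_S. pose proof (h_pos m0). lra. Qed.
Lemma h_add m n : h (m + n) = h m * h n.
Proof. unfold h. apply pow_add. Qed.
Lemma h_small eps : 0 < eps -> exists p, h p < eps.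
Proof.
  intros He. destruct (pow_lt_1_zero (/2) ltac:(rewrite Rabs_pos_eq; lra) eps He) as [N HN].
  exists N. specialize (HN N (le_n _)). rewrite Rabs_pos_eq in HN. exact HN.
  apply pow_le; lra.
Qed.
Lemma h_series_shift p : is_series (fun k => h (k + p)) (2 * h p).
Proof.
  assert (G : Rabs (/2) < 1) by (rewrite Rabs_pos_eq; lra).
  pose proof (is_series_scal_l (h p) _ _ (is_series_geom (/2) G)) as H.
  replace (2 * h p) with (scal (h p) (/ (1 - /2))).
  eapply is_series_ext. 2: exact H.
  intros n. unfold h. rewrite pow_add.
  change (((/ 2) ^ p * (/ 2) ^ n)%R = ((/ 2) ^ n * (/ 2) ^ p)%R). ring.
  change ((h p * (/ (1 - /2)))%R = (2 * h p)%R). field.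
Qed.

Lemma cs_nonneg A r : cover_sums A r -> 0 <= r.
Proof.
  intros [s [_ Hs]]. apply (ser_nonneg _ _ (fun n => Rlt_le _ _ (h_pos _)) Hs).
Qed.

Lemma cs_univ A : cover_sums A 2.
Proof.
  exists (fun k => repeat false k). split.
  - intros x _. exists 0%nat. reflexivity.
  - assert (Hg := is_series_geom (/2) ltac:(rewrite Rabs_pos_eq; lra)).
    replace (/ (1 - /2)) with 2 in Hg by field.
    eapply is_series_ext. 2: exact Hg.
    intros n. simpl. rewrite repeat_length. reflexivity.
Qed.

Lemma mu_glb_eq A : Glb_Rbar (cover_sums A) = Finite (mu A).
Proof.
  unfold mu. destruct (Glb_Rbar_correct (cover_sums A)) as [Hlb Hgl].
  assert (H0 : Rbar_le (Finite 0) (Glb_Rbar (cover_sums A))).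
  { apply Hgl. intros r Hr. simpl. apply (cs_nonneg A r Hr). }
  assert (H2 : Rbar_le (Glb_Rbar (cover_sums A)) (Finite 2)) by (apply Hlb, cs_univ).
  destruct (Glb_Rbar (cover_sums A)); simpl in *; tauto.
Qed.

Lemma mu_le A r : cover_sums A r -> mu A <= r.
Proof.
  intros Hr. destruct (Glb_Rbar_correct (cover_sums A)) as [Hlb _].
  rewrite mu_glb_eq in Hlb. apply (Hlb r Hr).
Qed.

Lemma mu_glb A c : (forall r, cover_sums A r -> c <= r) -> c <= mu A.
Proof.
  intros H. destruct (Glb_Rbar_correct (cover_sums A)) as [_ Hgl].
  rewrite mu_glb_eq in Hgl. apply (Hgl (Finite c)). intros r Hr. apply H, Hr.
Qed.

Lemma mu_ge0 A : 0 <= mu A.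
Proof. apply mu_glb. apply cs_nonneg. Qed.

Lemma mu_approx A eps : 0 < eps -> exists r, cover_sums A r /\ r < mu A + eps.
Proof.
  intros He. apply NNPP. intros Hn.
  assert (mu A + eps <= mu A). apply mu_glb. intros r Hr.
  apply Rnot_lt_le. intros Hlt. apply Hn. exists r. auto. lra.
Qed.

Lemma mu_ext A B : (forall x, A x <-> B x) -> mu A = mu B.
Proof.
  intros H. assert (A = B). apply functional_extensionality. intros x. apply propositional_extensionality. auto.
  subst. reflexivity.
Qed.

Lemma mu_mono A B : (forall x, A x -> B x) -> mu A <= mu B.
Proof.
  intros H. apply mu_glb. intros r [s [Hc Hs]]. apply mu_le. exists s. split; auto.
Qed.

Lemma mu_subadd A B : mu (fun x => A x \/ B x) <= mu A + mu B.
Proof.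
  apply Rnot_lt_le. intros Hlt.
  set (eps := (mu (fun x => A x \/ B x) - (mu A + mu B)) / 2).
  assert (He : 0 < eps) by (unfold eps; lra).
  destruct (mu_approx A eps He) as [ra [[sa [Ca Sa]] Ha]].
  destruct (mu_approx B eps He) as [rb [[sb [Cb Sb]] Hb]].
  assert (mu (fun x => A x \/ B x) <= ra + rb).
  { apply mu_le. exists (ileave sa sb). split.
    - intros x [Ax|Bx].
      + destruct (Ca x Ax) as [k Hk]. exists (2*k)%nat. unfold ileave.
        rewrite Nat.div2_double, Nat.even_mul. simpl. auto.
      + destruct (Cb x Bx) as [k Hk]. exists (S (2*k))%nat. unfold ileave.
        rewrite Nat.div2_succ_double, Nat.even_succ, Nat.odd_mul. simpl. auto.
    - eapply is_series_ext. 2: apply (ileave_series (fun k => (/ 2) ^ length (sa k)) (fun k => (/ 2) ^ length (sb k)) ra rb); try exact Sa; try exact Sb.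
      intros n. unfold ileave. destruct (Nat.even n); reflexivity.
      intros; apply Rlt_le, h_pos. intros; apply Rlt_le, h_pos. }
  unfold eps in *. lra.
Qed.

Lemma mu_N_le_eps s p : mu (Nb s) <= h (length s) + h p.
Proof.
  apply mu_le. exists (fun k => match k with 0%nat => s | S k => repeat false (k + S p) end).
  split.
  - intros x Hx. exists 0%nat. exact Hx.
  - apply is_series_decr_1.
    assert (Ht := h_series_shift (S p)).
    replace (2 * h (S p)) with (plus (h (length s) + h p) (opp ((/ 2) ^ length s))) in Ht.
    eapply is_series_ext. 2: exact Ht.
    + intros n. simpl. rewrite repeat_length. reflexivity.
    + rewrite h_S. change (plus (h (length s) + h p) (opp ((/ 2) ^ length s))) with
        ((h (length s) + h p) + - ((/2)^length s)). unfold h at 1. lra.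
Qed.

Lemma le_eps_h a b : (forall p, a <= b + h p) -> a <= b.
Proof.
  intros H. apply Rnot_lt_le. intros Hlt. destruct (h_small (a - b)) as [p Hp]. lra.
  specialize (H p). lra.
Qed.

Lemma mu_N_le s : mu (Nb s) <= h (length s).
Proof. apply le_eps_h. apply mu_N_le_eps. Qed.

Lemma mu_empty : mu (fun _ => False) = 0.
Proof.
  apply Rle_antisym. 2: apply mu_ge0.
  apply le_eps_h. intros p. rewrite Rplus_0_l.
  eapply Rle_trans. apply (mu_mono _ (Nb (repeat false p))). tauto.
  eapply Rle_trans. apply mu_N_le. rewrite repeat_length. lra.
Qed.

Lemma mu_empty' E : (forall x, ~ E x) -> mu E = 0.
Proof. intros H. rewrite <- mu_empty. apply mu_ext. firstorder. Qed.

Definition sumw (l : list (list bool)) : R := fold_right (fun s acc => h (length s) + acc) 0 l.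

Lemma mu_finite_cover X l : (forall x, X x -> exists s, In s l /\ Nb s x) -> mu X <= sumw l.
Proof.
  revert X. induction l as [|s l IH]; intros X H.
  - simpl. rewrite (mu_empty' X). lra. intros x Hx. destruct (H x Hx) as [s [[] _]].
  - simpl. eapply Rle_trans. apply (mu_mono X (fun x => Nb s x \/ (fun x => X x /\ ~ Nb s x) x)).
    { intros x Hx. destruct (classic (Nb s x)); auto. }
    eapply Rle_trans. apply mu_subadd. apply Rplus_le_compat. apply mu_N_le.
    apply IH. intros x [Hx Hn]. destruct (H x Hx) as [s' [[<-|Hi] Hs']]. contradiction. eauto.
Qed.

Definition ctl (x : cantor) : cantor := fun n => x (S n).
Definition ccons (b : bool) (x : cantor) : cantor := fun n => match n with 0%nat => b | S n => x n end.
Definition capp (t : list bool) (y : cantor) : cantor := fold_right ccons y t.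

Lemma prefix_S x n : prefix x (S n) = x 0%nat :: prefix (ctl x) n.
Proof. unfold prefix. simpl. rewrite <- seq_shift, map_map. reflexivity. Qed.

Lemma prefix_length x n : length (prefix x n) = n.
Proof. unfold prefix. rewrite length_map, length_seq. reflexivity. Qed.

Lemma N_nil x : Nb nil x.
Proof. reflexivity. Qed.

Lemma N_cons b s x : Nb (b :: s) x <-> x 0%nat = b /\ Nb s (ctl x).
Proof.
  unfold Defs.N. simpl length. rewrite prefix_S. split.
  - intros Hq. injection Hq. auto.
  - intros [-> H]. rewrite H. reflexivity.
Qed.

Lemma ccons_tl x : ccons (x 0%nat) (ctl x) = x.
Proof. apply functional_extensionality. intros [|n]; reflexivity. Qed.

Lemma N_app t y : Nb t (capp t y).
Proof. induction t. apply N_nil. apply N_cons. split. reflexivity. exact IHt. Qed.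

Lemma N_app_inv t x : Nb t x -> exists y, x = capp t y.
Proof.
  revert x. induction t as [|b t IH]; intros x H.
  - exists x. reflexivity.
  - apply N_cons in H. destruct H as [Hb Ht]. destruct (IH _ Ht) as [y Hy].
    exists y. simpl. rewrite <- Hy, <- Hb. symmetry. apply ccons_tl.
Qed.

Lemma prefix_app t y : prefix (capp t y) (length t) = t.
Proof. apply N_app. Qed.

Definition consS (b : bool) (X : cantor -> Prop) : cantor -> Prop := fun x => x 0%nat = b /\ X (ctl x).

Lemma mu_consS_le b X : mu (consS b X) <= mu X / 2.
Proof.
  cut (2 * mu (consS b X) <= mu X). lra.
  apply mu_glb. intros r [s [Hc Hs]].
  cut (mu (consS b X) <= r / 2). lra.
  apply mu_le. exists (fun k => b :: s k). split.
  - intros x [Hb HX]. destruct (Hc _ HX) as [k Hk]. exists k. apply N_cons. auto.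
  - pose proof (is_series_scal_l (/2) _ _ Hs) as H2.
    replace (r/2) with (scal (/2) r). eapply is_series_ext. 2: exact H2.
    intros n. simpl. change ((/ 2 * (/ 2) ^ length (s n))%R = ((/ 2) * (/ 2) ^ length (s n))%R). reflexivity.
    change ((/2 * r)%R = (r/2)%R). lra.
Qed.

Lemma mu_consS_ge b X : mu X <= 2 * mu (consS b X).
Proof.
  cut (mu X / 2 <= mu (consS b X)). lra.
  apply mu_glb. intros r [s [Hc Hs]].
  assert (Hb : is_series (fun k => 2 * h (length (s k))) (2 * r)).
  { pose proof (is_series_scal_l 2 _ _ Hs) as H2. eapply is_series_ext. 2: exact H2. reflexivity. }
  assert (Hbd : forall n, 0 <= h (length (List.tl (s n))) <= 2 * h (length (s n))).
  { intros n. split. apply Rlt_le, h_pos.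
    destruct (s n); simpl. rewrite h_0. lra. rewrite h_S. pose proof (h_pos (length l)). lra. }
  destruct (ser_compare (fun k => h (length (List.tl (s k)))) _ _ Hbd Hb) as [la [Hla Hle]].
  - cut (mu X <= la). lra. apply mu_le. exists (fun k => List.tl (s k)). split; auto.
    intros y Hy. destruct (Hc (ccons b y)) as [k Hk]. split. reflexivity. exact Hy.
    exists k. destruct (s k) as [|c s']. apply N_nil. apply N_cons in Hk. simpl. apply Hk.
Qed.

Lemma mu_consS b X : mu (consS b X) = mu X / 2.
Proof. pose proof (mu_consS_le b X). pose proof (mu_consS_ge b X). lra. Qed.

Definition sec (E : cantor -> Prop) (b : bool) : cantor -> Prop := fun y => E (ccons b y).

Lemma mu_split_ge E : mu (sec E false) + mu (sec E true) <= 2 * mu E.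
Proof.
  cut ((mu (sec E false) + mu (sec E true)) / 2 <= mu E). lra.
  apply mu_glb. intros r [s [Hc Hs]]. apply le_eps_h. intros p.
  set (c := fun (b : bool) k => match s k with nil => nil | b' :: s' => if Bool.eqb b' b then s' else repeat false (k + p) end).
  set (bnd := fun k => 2 * h (length (s k)) + h (k + p)).
  assert (Hbnd : is_series bnd (2 * r + 2 * h p)).
  { apply (is_series_plus (fun k => 2 * h (length (s k))) (fun k => h (k+p))).
    pose proof (is_series_scal_l 2 _ _ Hs) as H2. eapply is_series_ext. 2: exact H2. reflexivity.
    apply h_series_shift. }
  assert (Hcb : forall b k, h (length (c b k)) <= bnd k).
  { intros b k. unfold c, bnd. pose proof (h_pos (length (s k))). pose proof (h_pos (k + p)).
    destruct (s k) as [|b' s']. simpl length. rewrite h_0. lra. pose proof (h_pos (length s')).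
    destruct (Bool.eqb b' b); simpl length; rewrite ?repeat_length, ?h_S; lra. }
  destruct (ser_compare (fun k => h (length (c false k))) bnd _ ltac:(intros; split; [apply Rlt_le, h_pos| apply Hcb]) Hbnd) as [l0 [H0 _]].
  destruct (ser_compare (fun k => h (length (c true k))) bnd _ ltac:(intros; split; [apply Rlt_le, h_pos| apply Hcb]) Hbnd) as [l1 [H1 _]].
  assert (Hsum : l0 + l1 <= 2 * r + 2 * h p).
  { destruct (ser_compare (fun k => h (length (c false k)) + h (length (c true k))) bnd (2 * r + 2 * h p)) as [l01 [H01 Hl]]; auto.
    - intros k. split. pose proof (h_pos (length (c false k))). pose proof (h_pos (length (c true k))). lra.
      unfold c, bnd. pose proof (h_pos (length (s k))). pose proof (h_pos (k + p)).
      destruct (s k) as [|b' s']. simpl. rewrite h_0. lra. destruct b'; simpl; rewrite ?repeat_length, h_S; lra.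
    - pose proof (is_series_plus _ _ _ _ H0 H1) as H01'. pose proof (ser_unique _ _ _ H01' H01) as Eq. change (l0 + l1 = l01) in Eq. lra. }
  assert (E0 : mu (sec E false) <= l0).
  { apply mu_le. exists (c false). split; auto. intros y Hy. destruct (Hc _ Hy) as [k Hk]. exists k. unfold c.
    destruct (s k) as [|b' s']. apply N_nil. apply N_cons in Hk. destruct Hk as [Hb Hk]. simpl in Hb. subst b'. exact Hk. }
  assert (E1 : mu (sec E true) <= l1).
  { apply mu_le. exists (c true). split; auto. intros y Hy. destruct (Hc _ Hy) as [k Hk]. exists k. unfold c.
    destruct (s k) as [|b' s']. apply N_nil. apply N_cons in Hk. destruct Hk as [Hb Hk]. simpl in Hb. subst b'. exact Hk. }
  lra.
Qed.

Lemma mu_split E : mu E = (mu (sec E false) + mu (sec E true)) / 2.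
Proof.
  apply Rle_antisym. 2: pose proof (mu_split_ge E); lra.
  eapply Rle_trans. apply (mu_mono _ (fun x => consS false (sec E false) x \/ consS true (sec E true) x)).
  { intros x Hx. unfold consS, sec. destruct (x 0%nat) eqn:Hx0; [right|left]; split; auto; rewrite <- Hx0, ccons_tl; auto. }
  eapply Rle_trans. apply mu_subadd. rewrite !mu_consS. lra.
Qed.

Lemma sumw_In s l : In s l -> h (length s) <= sumw l.
Proof.
  induction l as [|s' l IH]; simpl. tauto.
  assert (0 <= sumw l). { clear. induction l; simpl. lra. pose proof (h_pos (length a)). lra. }
  intros [->|Hi]. lra. specialize (IH Hi). pose proof (h_pos (length s')). lra.
Qed.

Definition secl (b : bool) (l : list (list bool)) : list (list bool) :=
  flat_map (fun s => match s with nil => nil | b' :: s' => if Bool.eqb b' b then s' :: nil else nil end) l.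

Lemma sumw_secl l : ~ In nil l -> sumw l = (sumw (secl false l) + sumw (secl true l)) / 2.
Proof.
  induction l as [|s l IH]; intros Hn. simpl. lra.
  simpl. rewrite IH by (intros H; apply Hn; right; exact H).
  destruct s as [|b s]. exfalso; apply Hn; left; reflexivity.
  destruct b; simpl; rewrite h_S; lra.
Qed.

Lemma In_secl b s l : In (b :: s) l -> In s (secl b l).
Proof.
  intros H. unfold secl. apply in_flat_map. exists (b :: s). split; auto.
  rewrite Bool.eqb_reflx. left; reflexivity.
Qed.

Lemma secl_len b l n : (forall s, In s l -> (length s <= S n)%nat) -> forall s, In s (secl b l) -> (length s <= n)%nat.
Proof.
  intros H s Hs. unfold secl in Hs. apply in_flat_map in Hs. destruct Hs as [s0 [Hs0 Hi]].
  specialize (H _ Hs0). destruct s0 as [|b' s']. destruct Hi.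
  destruct (Bool.eqb b' b). destruct Hi as [<-|[]]. simpl in H. lia. destruct Hi.
Qed.

Lemma kraft n : forall l, (forall s, In s l -> (length s <= n)%nat) ->
  (forall x, exists s, In s l /\ Nb s x) -> 1 <= sumw l.
Proof.
  induction n as [|n IH]; intros l Hl Hc.
  - destruct (Hc (fun _ => false)) as [s [Hs _]]. specialize (Hl s Hs).
    destruct s. apply (sumw_In _ _ Hs). simpl in Hl. lia.
  - destruct (in_dec (list_eq_dec Bool.bool_dec) nil l) as [Hn|Hn].
    + apply (sumw_In _ _ Hn).
    + rewrite (sumw_secl l Hn).
      assert (forall b, 1 <= sumw (secl b l)).
      { intros b. apply IH. apply secl_len; auto.
        intros y. destruct (Hc (ccons b y)) as [s [Hs Hy]]. destruct s as [|b' s]. contradiction.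
        apply N_cons in Hy. destruct Hy as [Hb Hy]. simpl in Hb. subst b'.
        exists s. split. apply In_secl; auto. exact Hy. }
      pose proof (H false). pose proof (H true). lra.
Qed.

Lemma prefix_snoc x n : prefix x (S n) = prefix x n ++ x n :: nil.
Proof. unfold prefix. rewrite seq_S, map_app. reflexivity. Qed.

Lemma N_snoc t b x : Nb (t ++ b :: nil) x <-> Nb t x /\ x (length t) = b.
Proof.
  unfold Defs.N. rewrite length_app. simpl length. rewrite Nat.add_1_r, prefix_snoc. split.
  - intros H. apply app_inj_tail in H. destruct H as [-> ->]. auto.
  - intros [-> ->]. reflexivity.
Qed.

Section Konig.
Variable s : nat -> list bool.
Definition kgood (t : list bool) : Prop := forall K, exists x, Nb t x /\ forall k, (k <= K)%nat -> ~ Nb (s k) x.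

Lemma kgood_step t : kgood t -> kgood (t ++ false :: nil) \/ kgood (t ++ true :: nil).
Proof.
  intros H. apply NNPP. intros Hn. apply not_or_and in Hn. destruct Hn as [H0 H1].
  unfold kgood in H0, H1. apply not_all_ex_not in H0. apply not_all_ex_not in H1.
  destruct H0 as [K0 H0]. destruct H1 as [K1 H1].
  destruct (H (max K0 K1)) as [x [Ht Hk]].
  destruct (x (length t)) eqn:Hb.
  - apply H1. exists x. split. apply N_snoc; auto. intros k Hk' Hs. apply (Hk k); auto. lia.
  - apply H0. exists x. split. apply N_snoc; auto. intros k Hk' Hs. apply (Hk k); auto. lia.
Qed.

Fixpoint pth (n : nat) : list bool :=
  match n with
  | 0%nat => nil
  | S n => pth n ++ (if excluded_middle_informative (kgood (pth n ++ false :: nil)) then false else true) :: nil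
  end.

Lemma pth_len n : length (pth n) = n.
Proof. induction n; simpl; auto. rewrite length_app. simpl. lia. Qed.

Lemma pth_good n : kgood nil -> kgood (pth n).
Proof.
  intros H0. induction n; simpl; auto.
  destruct (excluded_middle_informative (kgood (pth n ++ false :: nil))); auto.
  destruct (kgood_step _ IHn); tauto.
Qed.

Definition kx : cantor := fun n => nth n (pth (S n)) false.

Lemma kx_prefix n : prefix kx n = pth n.
Proof.
  induction n. reflexivity.
  rewrite prefix_snoc, IHn. simpl pth at 2. f_equal. f_equal.
  unfold kx. simpl pth. rewrite app_nth2; rewrite pth_len; auto. rewrite Nat.sub_diag. reflexivity.
Qed.

Lemma konig : (forall x, exists k, Nb (s k) x) -> exists K, forall x, exists k, (k <= K)%nat /\ Nb (s k) x.
Proof.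
  intros Hc. apply NNPP. intros Hn.
  assert (G : kgood nil).
  { intros K. apply NNPP. intros HK. apply Hn. exists K. intros x. apply NNPP. intros Hx.
    apply HK. exists x. split. apply N_nil. intros k Hk Hs. apply Hx. eauto. }
  destruct (Hc kx) as [k Hk].
  pose proof (pth_good (length (s k)) G k) as [y [Hy Hny]].
  apply (Hny k (le_n _)). unfold Defs.N in *. rewrite kx_prefix in Hk.
  rewrite pth_len in Hy. rewrite Hk in Hy. exact Hy.
Qed.
End Konig.

Lemma sumw_app l1 l2 : sumw (l1 ++ l2) = sumw l1 + sumw l2.
Proof. induction l1; simpl; lra. Qed.

Lemma sumw_seq (s : nat -> list bool) K :
  sumw (map s (seq 0 (S K))) = sum_f_R0 (fun k => h (length (s k))) K.
Proof.
  induction K. simpl. lra.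
  rewrite seq_S, map_app, sumw_app, IHK. simpl. lra.
Qed.

Lemma mu_full : mu (fun _ => True) = 1.
Proof.
  apply Rle_antisym.
  - eapply Rle_trans. apply (mu_mono _ (Nb nil)). intros; apply N_nil. apply mu_N_le.
  - apply mu_glb. intros r [s [Hc Hs]].
    destruct (konig s (fun x => Hc x I)) as [K HK].
    set (l := map s (seq 0 (S K))).
    apply Rle_trans with (sumw l).
    + apply (kraft (list_max (map (@length bool) l))).
      * intros t Ht. assert (F := proj1 (list_max_le (map (@length bool) l) _) (le_n _)).
        rewrite Forall_forall in F. apply F. apply in_map. exact Ht.
      * intros x. destruct (HK x) as [k [Hk Hn]]. exists (s k). split; auto.
        unfold l. apply in_map. apply in_seq. lia.
    + unfold l. rewrite sumw_seq. apply ser_nonneg_ge_partial; auto.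
      intros; apply Rlt_le, h_pos.
Qed.

Definition sect (E : cantor -> Prop) (t : list bool) : cantor -> Prop := fun y => E (capp t y).

Lemma mu_inter_N t : forall E, mu (fun x => E x /\ Nb t x) = h (length t) * mu (sect E t).
Proof.
  induction t as [|b t IH]; intros E.
  - simpl length. rewrite h_0, Rmult_1_l. apply mu_ext. intros x. unfold sect. simpl. split; [tauto|]. intros; split; auto. apply N_nil.
  - rewrite mu_split.
    assert (Hb : forall b', b' <> b -> mu (sec (fun x => E x /\ Nb (b :: t) x) b') = 0).
    { intros b' Hne. apply mu_empty'. intros y [_ Hy]. apply N_cons in Hy. destruct Hy as [Hy _]. simpl in Hy. auto. }
    assert (He : mu (sec (fun x => E x /\ Nb (b :: t) x) b) = h (length t) * mu (sect E (b :: t))).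
    { change (sect E (b :: t)) with (sect (sec E b) t). rewrite <- IH. apply mu_ext. intros y. unfold sec. rewrite N_cons. simpl. unfold ctl. simpl. tauto. }
    simpl length. rewrite h_S.
    destruct b.
    + rewrite (Hb false) by discriminate. rewrite He. lra.
    + rewrite (Hb true) by discriminate. rewrite He. lra.
Qed.

Lemma mu_N t : mu (Nb t) = h (length t).
Proof.
  rewrite (mu_ext _ (fun x => (fun _ => True) x /\ Nb t x)) by tauto.
  rewrite mu_inter_N. unfold sect. rewrite mu_full. lra.
Qed.

Definition dens (E : cantor -> Prop) (t : list bool) : R := mu (sect E t).

Lemma ratio_dens E x n : mu (fun y => E y /\ Nb (prefix x n) y) / mu (Nb (prefix x n)) = dens E (prefix x n).
Proof.
  rewrite mu_inter_N, mu_N. unfold dens. pose proof (h_pos (length (prefix x n))). field. lra.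
Qed.

Lemma dens_le1 E t : dens E t <= 1.
Proof. unfold dens. rewrite <- mu_full. apply mu_mono. auto. Qed.

Lemma dens_ge0 E t : 0 <= dens E t.
Proof. apply mu_ge0. Qed.

Inductive tree := Lf (b : bool) | Nd (t0 t1 : tree).

Fixpoint mem (T : tree) (x : cantor) : Prop :=
  match T with
  | Lf b => b = true
  | Nd t0 t1 => if x 0%nat then mem t1 (ctl x) else mem t0 (ctl x)
  end.

Fixpoint val (T : tree) : R :=
  match T with
  | Lf b => if b then 1 else 0
  | Nd t0 t1 => (val t0 + val t1) / 2
  end.

Fixpoint depth (T : tree) : nat :=
  match T with Lf _ => 0%nat | Nd t0 t1 => S (max (depth t0) (depth t1)) end.

Fixpoint sub (T : tree) (t : list bool) {struct t} : tree :=
  match t, T with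
  | nil, _ => T
  | _, Lf b => Lf b
  | b :: t, Nd t0 t1 => sub (if b then t1 else t0) t
  end.

Lemma sub_app T p q : sub T (p ++ q) = sub (sub T p) q.
Proof.
  revert T. induction p as [|b p IH]; intros T. reflexivity.
  destruct T as [c|t0 t1].
  - simpl. destruct (p ++ q) eqn:E; destruct p; simpl; auto; destruct q; simpl; auto; discriminate.
  - simpl. apply IH.
Qed.

Lemma mu_mem T : mu (mem T) = val T.
Proof.
  induction T as [[|]|t0 IH0 t1 IH1].
  - simpl val. rewrite <- mu_full. apply mu_ext. simpl. tauto.
  - apply mu_empty'. simpl. discriminate.
  - rewrite mu_split. simpl. rewrite <- IH0, <- IH1. reflexivity.
Qed.

Lemma meas_mem T : measurable (mem T).
Proof.
  induction T as [[|]|t0 IH0 t1 IH1]; intros E.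
  - rewrite (mu_ext (fun x => E x /\ mem (Lf true) x) E) by (simpl; tauto).
    rewrite (mu_empty' (fun x => E x /\ ~ mem (Lf true) x)) by (simpl; tauto). lra.
  - rewrite (mu_ext (fun x => E x /\ ~ mem (Lf false) x) E) by (simpl; intuition discriminate).
    rewrite (mu_empty' (fun x => E x /\ mem (Lf false) x)) by (simpl; intuition discriminate). lra.
  - rewrite (mu_split E), (mu_split (fun x => E x /\ mem (Nd t0 t1) x)), (mu_split (fun x => E x /\ ~ mem (Nd t0 t1) x)).
    rewrite (IH0 (sec E false)), (IH1 (sec E true)).
    assert (H1 : mu (sec (fun x => E x /\ mem (Nd t0 t1) x) false) = mu (fun x => sec E false x /\ mem t0 x)) by (apply mu_ext; intros; unfold sec; simpl; tauto).
    assert (H2 : mu (sec (fun x => E x /\ mem (Nd t0 t1) x) true) = mu (fun x => sec E true x /\ mem t1 x)) by (apply mu_ext; intros; unfold sec; simpl; tauto).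
    assert (H3 : mu (sec (fun x => E x /\ ~ mem (Nd t0 t1) x) false) = mu (fun x => sec E false x /\ ~ mem t0 x)) by (apply mu_ext; intros; unfold sec; simpl; tauto).
    assert (H4 : mu (sec (fun x => E x /\ ~ mem (Nd t0 t1) x) true) = mu (fun x => sec E true x /\ ~ mem t1 x)) by (apply mu_ext; intros; unfold sec; simpl; tauto).
    lra.
Qed.

Lemma mem_sub T t y : mem (sub T t) y <-> mem T (capp t y).
Proof.
  revert T. induction t as [|b t IH]; intros T. reflexivity.
  destruct T as [c|t0 t1].
  - simpl. destruct t; reflexivity.
  - simpl. destruct b; rewrite IH; reflexivity.
Qed.

Lemma dens_mem T t : dens (mem T) t = val (sub T t).
Proof. unfold dens. rewrite <- mu_mem. apply mu_ext. intros y. unfold sect. rewrite mem_sub. tauto. Qed.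

Fixpoint tor (a b : tree) : tree :=
  match a, b with
  | Lf true, _ => Lf true
  | Lf false, _ => b
  | Nd _ _, Lf true => Lf true
  | Nd _ _, Lf false => a
  | Nd a0 a1, Nd b0 b1 => Nd (tor a0 b0) (tor a1 b1)
  end.

Lemma mem_tor a b x : mem (tor a b) x <-> mem a x \/ mem b x.
Proof.
  revert b x. induction a as [[|]|a0 IH0 a1 IH1]; intros b x.
  - simpl. tauto.
  - simpl. intuition discriminate.
  - destruct b as [[|]|b0 b1]; simpl; try (intuition discriminate).
    destruct (x 0%nat). apply IH1. apply IH0.
Qed.

Fixpoint bt (s : list bool) : tree :=
  match s with
  | nil => Lf true
  | b :: s => if b then Nd (Lf false) (bt s) else Nd (bt s) (Lf false)
  end.

Lemma mem_bt s x : mem (bt s) x <-> Nb s x.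
Proof.
  revert x. induction s as [|b s IH]; intros x. simpl. split; auto. intros; apply N_nil.
  rewrite N_cons. destruct b; simpl; destruct (x 0%nat); rewrite ?IH; intuition discriminate.
Qed.

Definition fu (l : list (list bool)) : tree := fold_right (fun s T => tor (bt s) T) (Lf false) l.

Lemma mem_fu l x : mem (fu l) x <-> exists s, In s l /\ Nb s x.
Proof.
  induction l as [|s l IH]; simpl. split. discriminate. intros [? [[] _]].
  rewrite mem_tor, mem_bt, IH. split.
  - intros [H|[s' [H1 H2]]]; eauto.
  - intros [s' [[<-|H1] H2]]; eauto.
Qed.

Definition sd (A B : cantor -> Prop) : cantor -> Prop := fun x => (A x /\ ~ B x) \/ (B x /\ ~ A x).

Lemma sd_sym A B : mu (sd A B) = mu (sd B A).
Proof. apply mu_ext. unfold sd. tauto. Qed.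

Lemma sd_tri A B C : mu (sd A C) <= mu (sd A B) + mu (sd B C).
Proof.
  eapply Rle_trans. 2: apply mu_subadd. apply mu_mono. unfold sd. intros x.
  destruct (classic (B x)); tauto.
Qed.

Lemma sd_self A : mu (sd A A) = 0.
Proof. apply mu_empty'. unfold sd. tauto. Qed.

Lemma dens_err1 A B t : dens A t <= dens B t + mu (sd A B) / h (length t).
Proof.
  unfold dens. eapply Rle_trans. apply (mu_mono _ (fun y => sect B t y \/ sect (sd A B) t y)).
  { intros y Hy. unfold sect, sd in *. destruct (classic (B (capp t y))); tauto. }
  eapply Rle_trans. apply mu_subadd. apply Rplus_le_compat_l.
  pose proof (mu_inter_N t (sd A B)) as E. pose proof (h_pos (length t)).
  assert (mu (fun x => sd A B x /\ Nb t x) <= mu (sd A B)) by (apply mu_mono; tauto).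
  apply (Rmult_le_reg_l (h (length t))); auto. rewrite <- E. field_simplify; lra.
Qed.

Lemma dens_err A B t : Rabs (dens A t - dens B t) <= mu (sd A B) / h (length t).
Proof.
  pose proof (dens_err1 A B t). pose proof (dens_err1 B A t). rewrite sd_sym in H0.
  apply Rabs_le. lra.
Qed.

Lemma approx A eps : measurable A -> 0 < eps -> exists T, mu (sd A (mem T)) < eps.
Proof.
  intros HA He.
  destruct (mu_approx A (eps/3)) as [r [[s [Hc Hs]] Hr]]; [lra|].
  set (U := fun x => exists k, Nb (s k) x).
  assert (HU : mu U <= r) by (apply mu_le; exists s; split; auto).
  assert (HUa : mu (fun x => U x /\ ~ A x) < eps / 3).
  { pose proof (HA U) as C. rewrite (mu_ext (fun x => U x /\ A x) A) in C.
    lra. intros x. split. tauto. intros Ax. split; auto. apply Hc; auto. }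
  assert (Hw : forall n, 0 <= h (length (s n))) by (intros; apply Rlt_le, h_pos).
  assert (Hex : ex_series (fun k => h (length (s k)))) by (exists r; exact Hs).
  assert (Hs0 : is_series (fun k => h (length (s k))) r) by exact Hs.
  apply is_series_Reals in Hs.
  destruct (Hs (eps/3)) as [n Hn]; [lra|]. specialize (Hn n (le_n _)).
  unfold Rdist, R_dist in Hn. apply Rabs_def2 in Hn.
  set (l := map s (seq 0 (S n))).
  exists (fu l).
  assert (Htail : mu (fun x => U x /\ ~ mem (fu l) x) <= r - sum_f_R0 (fun k => h (length (s k))) n).
  { apply mu_le. exists (fun k => s (S n + k)%nat). split.
    - intros x [[k Hk] Hn']. destruct (Compare_dec.le_lt_dec k n).
      + exfalso. apply Hn'. apply mem_fu. exists (s k). split; auto. unfold l. apply in_map, in_seq. lia.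
      + exists (k - S n)%nat. replace (S n + (k - S n))%nat with k by lia. auto.
    - assert (E := Series_incr_n (fun k => h (length (s k))) (S n) ltac:(lia) Hex).
      rewrite (is_series_unique _ _ Hs0) in E. simpl pred in E.
      replace (r - sum_f_R0 (fun k => h (length (s k))) n) with (Series (fun k => h (length (s (S n + k)%nat)))) by lra.
      apply Series_correct. apply (ex_series_incr_n (fun k => h (length (s k))) (S n)). exact Hex. }
  eapply Rle_lt_trans. apply (mu_mono _ (fun x => (fun x => U x /\ ~ mem (fu l) x) x \/ (fun x => U x /\ ~ A x) x)).
  { intros x [[Ax Hx]|[Hx Ax]].
    - left. split; auto. apply Hc; auto.
    - right. split; auto. apply mem_fu in Hx. destruct Hx as [s' [Hi Hs']]. unfold l in Hi.
      apply in_map_iff in Hi. destruct Hi as [k [<- _]]. exists k. auto. }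
  eapply Rle_lt_trans. apply mu_subadd. unfold h in Htail. lra.
Qed.

Fixpoint zt (m : nat) : tree := match m with 0%nat => Lf false | S m => Nd (zt m) (Lf true) end.
Definition rt (m : nat) : tree := Nd (zt m) (Lf true).
Fixpoint qt (i : nat) (tau : tree) : tree := match i with 0%nat => tau | S i => Nd (Lf true) (qt i tau) end.
Definition dt (a m : nat) : tree := qt a (rt m).
Fixpoint ch (a n j : nat) : tree := match n with 0%nat => Lf true | S n => Nd (dt a j) (ch a n (S j)) end.
Definition gad (k a : nat) : tree := ch a (S k) 0.
Fixpoint ft (k a i : nat) : tree := match i with 0%nat => gad k a | S i => Nd (ft k a i) (ft k a i) end.
Fixpoint gtr (k a : nat) (T : tree) : tree :=
  match T with Lf true => ft k a k | Lf false => Lf false | Nd t0 t1 => Nd (gtr k a t0) (gtr k a t1) end.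

Lemma val_zt m : val (zt m) = 1 - h m.
Proof. induction m; simpl val. rewrite h_0. lra. rewrite IHm, h_S. lra. Qed.
Lemma val_rt m : val (rt m) = 1 - h (S m).
Proof. unfold rt. simpl val. rewrite val_zt, h_S. lra. Qed.
Lemma val_qt i tau : val (qt i tau) = 1 - h i * (1 - val tau).
Proof. induction i; simpl val. rewrite h_0. lra. rewrite IHi, h_S. lra. Qed.
Lemma val_dt a m : val (dt a m) = 1 - h (a + S m).
Proof. unfold dt. rewrite val_qt, val_rt, h_add. ring. Qed.
Lemma val_dt_ge a m : 1 - h (S a) <= val (dt a m).
Proof. rewrite val_dt. pose proof (h_mono (S a) (a + S m) ltac:(lia)). lra. Qed.
Lemma val_ch a n j : 1 - h (S a) <= val (ch a n j).
Proof.
  revert j. induction n; intros j; simpl val. pose proof (h_pos (S a)); lra.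
  pose proof (val_dt_ge a j). pose proof (IHn (S j)). lra.
Qed.
Lemma val_gad_ge k a : 1 - h (S a) <= val (gad k a).
Proof. apply val_ch. Qed.
Lemma val_gad_le k a : val (gad k a) <= 1.
Proof. rewrite <- mu_mem, <- mu_full. apply mu_mono. auto. Qed.
Lemma val_ft k a i : val (ft k a i) = val (gad k a).
Proof. induction i; [reflexivity|]. change (val (ft k a (S i))) with ((val (ft k a i) + val (ft k a i))/2). rewrite IHi. lra. Qed.
Lemma val_gtr k a T : val (gtr k a T) = val T * val (gad k a).
Proof. induction T as [[|]|t0 I0 t1 I1]. simpl gtr. rewrite val_ft. simpl val. ring. simpl. ring. change (val (gtr k a (Nd t0 t1))) with ((val (gtr k a t0) + val (gtr k a t1))/2). rewrite I0, I1. simpl val. field. Qed.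

Lemma mem_gtr_sub k a T x : mem (gtr k a T) x -> mem T x.
Proof.
  revert x. induction T as [[|]|t0 I0 t1 I1]; intros x; simpl; auto.
  destruct (x 0%nat); auto.
Qed.

Lemma sub_Lf c p : sub (Lf c) p = Lf c.
Proof. destruct p; reflexivity. Qed.

Definition TP (tau : tree) (p : list bool) (beta : R) : Prop :=
  forall l, (l <= length p)%nat -> beta <= val (sub tau (firstn l p)).

Lemma TP_nil tau beta : beta <= val tau -> TP tau nil beta.
Proof. intros H l Hl. simpl in Hl. replace l with 0%nat by lia. exact H. Qed.

Lemma TP_app tau p q beta : TP tau p beta -> TP (sub tau p) q beta -> TP tau (p ++ q) beta.
Proof.
  intros H1 H2 l Hl. rewrite length_app in Hl. destruct (Compare_dec.le_lt_dec l (length p)).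
  - rewrite firstn_app. replace (l - length p)%nat with 0%nat by lia. simpl. rewrite app_nil_r. apply H1; auto.
  - rewrite firstn_app, firstn_all2 by lia. rewrite sub_app. apply H2. lia.
Qed.

Lemma TP_mono tau p b1 b2 : b2 <= b1 -> TP tau p b1 -> TP tau p b2.
Proof. intros H H1 l Hl. specialize (H1 l Hl). lra. Qed.

Lemma TP_one tau b beta : beta <= val tau -> beta <= val (sub tau (b :: nil)) -> TP tau (b :: nil) beta.
Proof. intros H1 H2 l Hl. destruct l. exact H1. simpl in Hl. replace l with 0%nat by lia. exact H2. Qed.

Lemma TP_cons tau b p beta : beta <= val tau -> TP (sub tau (b :: nil)) p beta -> TP tau (b :: p) beta.
Proof.
  intros H1 H2. change (b :: p) with ((b :: nil) ++ p). apply TP_app; auto.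
  apply TP_one; auto. specialize (H2 0%nat ltac:(lia)). exact H2.
Qed.

Lemma TP_ch a beta : beta <= 1 - h (S a) -> forall j n jj, TP (ch a n jj) (repeat true j) beta.
Proof.
  intros Hb j. induction j; intros n jj.
  - apply TP_nil. pose proof (val_ch a n jj). lra.
  - simpl repeat. apply TP_cons. pose proof (val_ch a n jj). lra.
    destruct n. simpl. intros l _. rewrite sub_Lf. simpl. pose proof (h_pos (S a)). lra.
    apply IHj.
Qed.

Lemma TP_qt i tau beta : beta <= val tau -> val tau <= 1 -> forall j, (j <= i)%nat -> TP (qt i tau) (repeat true j) beta.
Proof.
  intros Hb H1 j. revert i. induction j; intros i Hji.
  - apply TP_nil. rewrite val_qt. pose proof (h_pos i). pose proof (h_le1 i). nra.
  - destruct i. lia. simpl repeat. apply TP_cons.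
    rewrite val_qt. pose proof (h_pos (S i)). pose proof (h_le1 (S i)). nra.
    apply IHj. lia.
Qed.

Lemma sub_ch_rep a j : forall n jj, (j <= n)%nat -> sub (ch a n jj) (repeat true j) = ch a (n - j) (jj + j).
Proof.
  induction j; intros n jj H. simpl. rewrite Nat.sub_0_r, Nat.add_0_r. reflexivity.
  destruct n. lia. simpl. rewrite IHj by lia. f_equal. lia.
Qed.

Lemma sub_qt_rep tau j : forall i, (j <= i)%nat -> sub (qt i tau) (repeat true j) = qt (i - j) tau.
Proof.
  induction j; intros i H. simpl. rewrite Nat.sub_0_r. reflexivity.
  destruct i. lia. simpl. apply IHj. lia.
Qed.

Definition dn (m a : nat) : list bool := repeat true m ++ false :: repeat true a.
Definition dp (m a : nat) : list bool := dn m a ++ true :: nil.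

Lemma sub_gad_dn k a m : (m <= k)%nat -> sub (gad k a) (dn m a) = rt m.
Proof.
  intros H. unfold dn, gad. rewrite sub_app, sub_ch_rep by lia.
  replace (S k - m)%nat with (S (k - m)) by lia. simpl. change (sub (dt a m) (repeat true a) = rt m).
  unfold dt. rewrite sub_qt_rep by lia. rewrite Nat.sub_diag. reflexivity.
Qed.

Lemma sub_gad_dp k a m : (m <= k)%nat -> sub (gad k a) (dp m a) = Lf true.
Proof. intros H. unfold dp. rewrite sub_app, sub_gad_dn by auto. reflexivity. Qed.

Lemma TP_gad_dp k a m : (m <= k)%nat -> (m <= a)%nat -> TP (gad k a) (dp m a) (1 - h (S m)).
Proof.
  intros Hk Ha. pose proof (h_mono (S m) (S a) ltac:(lia)) as Hh.
  unfold dp, dn. rewrite <- app_assoc. apply TP_app.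
  - apply TP_ch. lra.
  - unfold gad. rewrite sub_ch_rep by lia. replace (S k - m)%nat with (S (k - m)) by lia.
    apply TP_cons. pose proof (val_ch a (S (k-m)) (0 + m)). lra.
    replace (sub (ch a (S (k - m)) (0 + m)) (false :: nil)) with (dt a m) by reflexivity.
    apply TP_app.
    + unfold dt. apply TP_qt. rewrite val_rt. lra. rewrite val_rt. pose proof (h_pos (S m)). lra. lia.
    + unfold dt. rewrite sub_qt_rep, Nat.sub_diag by lia. simpl qt.
      pose proof (h_pos (S m)). apply TP_one. rewrite val_rt; lra. simpl. lra.
Qed.

Lemma sub_ft k a u : forall i, (length u <= i)%nat -> sub (ft k a i) u = ft k a (i - length u).
Proof.
  induction u as [|b u IH]; intros i H. simpl. rewrite Nat.sub_0_r. reflexivity.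
  destruct i. simpl in H. lia. simpl in H. destruct b; simpl; apply IH; lia.
Qed.

Lemma TP_ft k a i p : (length p <= i)%nat -> TP (ft k a i) p (val (gad k a)).
Proof.
  intros H l Hl. rewrite sub_ft. rewrite val_ft. lra.
  rewrite firstn_length. lia.
Qed.

Lemma greedy k a T : forall u, (length u <= k)%nat -> 0 < val (sub (gtr k a T) u) ->
  exists p, sub (gtr k a T) (u ++ p) = gad k a /\ (k <= length (u ++ p))%nat /\
    (length (u ++ p) <= depth T + k)%nat /\ TP (sub (gtr k a T) u) p (val (sub (gtr k a T) u)).
Proof.
  induction T as [[|]|t0 I0 t1 I1]; intros u Hu Hv.
  - simpl gtr in *. exists (repeat false (k - length u)).
    rewrite sub_app, sub_ft by auto. rewrite sub_ft; rewrite repeat_length. 2: lia.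
    rewrite length_app, repeat_length. simpl depth.
    replace (k - length u - (k - length u))%nat with 0%nat by lia.
    split. reflexivity. split. lia. split. lia.
    rewrite val_ft. apply TP_ft. rewrite repeat_length. lia.
  - simpl gtr in Hv. rewrite sub_Lf in Hv. simpl in Hv. lra.
  - destruct u as [|b u].
    + simpl in Hv. simpl.
      assert (HB : exists b : bool, val (gtr k a (Nd t0 t1)) <= val (gtr k a (if b then t1 else t0))).
      { simpl val. destruct (Rle_dec (val (gtr k a t0)) (val (gtr k a t1))). exists true. lra. exists false. lra. }
      destruct HB as [b Hb].
      assert (Hvb : 0 < val (sub (gtr k a (if b then t1 else t0)) nil)) by (simpl in *; lra).
      assert (IH : exists p, sub (gtr k a (if b then t1 else t0)) (nil ++ p) = gad k a /\ (k <= length (nil ++ p))%nat /\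
        (length (nil ++ p) <= depth (if b then t1 else t0) + k)%nat /\
        TP (sub (gtr k a (if b then t1 else t0)) nil) p (val (sub (gtr k a (if b then t1 else t0)) nil))).
      { destruct b; [apply I1|apply I0]; simpl; auto; lia. }
      destruct IH as [p [H1 [H2 [H3 H4]]]]. exists (b :: p). simpl in *.
      split. destruct b; auto. split. lia. split.
      destruct b; pose proof (Nat.le_max_l (depth t0) (depth t1)); pose proof (Nat.le_max_r (depth t0) (depth t1)); lia.
      apply TP_cons. simpl; lra. simpl. destruct b; (eapply TP_mono; [|exact H4]); simpl in *; lra.
    + simpl in Hu, Hv. simpl.
      assert (IH : exists p, sub (gtr k a (if b then t1 else t0)) (u ++ p) = gad k a /\ (k <= length (u ++ p))%nat /\
        (length (u ++ p) <= depth (if b then t1 else t0) + k)%nat /\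
        TP (sub (gtr k a (if b then t1 else t0)) u) p (val (sub (gtr k a (if b then t1 else t0)) u))).
      { destruct b; [apply I1|apply I0]; auto; lia. }
      destruct IH as [p [H1 [H2 [H3 H4]]]]. exists p.
      split. destruct b; auto. split. lia. split.
      destruct b; pose proof (Nat.le_max_l (depth t0) (depth t1)); pose proof (Nat.le_max_r (depth t0) (depth t1)); lia.
      destruct b; auto.
Qed.

Definition rad (T : tree) (k a : nat) : R := h (depth T + 3 * k + a + 2).

Definition EvInf (ev : nat -> option nat) : Prop :=
  forall M, exists N, forall n, (N <= n)%nat -> forall m, ev n = Some m -> (M < m)%nat.

Lemma seg_lemma (L : nat -> nat) : (forall n, (n <= L n)%nat) ->
  forall N l, (L N <= l)%nat -> exists n, (N <= n)%nat /\ (L n <= l)%nat /\ (l <= L (S n))%nat.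
Proof.
  intros HL. assert (forall j N l, (L N <= l)%nat -> (l < N + j)%nat -> exists n, (N <= n)%nat /\ (L n <= l)%nat /\ (l <= L (S n))%nat).
  { induction j; intros N l H1 H2. pose proof (HL N). lia.
    destruct (Compare_dec.le_lt_dec l (L (S N))). exists N. repeat split; auto.
    destruct (IHj (S N) l) as [n [Hn1 Hn2]]; try lia. exists n. split. lia. auto. }
  intros N l H1. apply (H (S l) N l H1). lia.
Qed.

Lemma map_nth_firstn (l : list bool) n : (n <= length l)%nat -> map (fun i => nth i l false) (seq 0 n) = firstn n l.
Proof.
  revert n. induction l as [|x l IH]; intros n Hn.
  - simpl in Hn. replace n with 0%nat by lia. reflexivity.
  - destruct n. reflexivity. simpl. f_equal. rewrite <- seq_shift, map_map. apply IH. simpl in Hn. lia.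
Qed.

Lemma abs_le x e : Rabs x <= e -> - e <= x <= e.
Proof. intros H. pose proof (Rle_abs x). pose proof (Rle_abs (-x)). rewrite Rabs_Ropp in *. lra. Qed.

Section Core.
Variable A : cantor -> Prop.
Variable Tf : nat -> tree.
Variable qf : nat -> nat.
Definition ak (k : nat) : nat := (k + qf k)%nat.
Definition gk (k : nat) : tree := gtr k (ak k) (Tf k).
Hypothesis Hpos : forall k, 0 < val (Tf k).
Hypothesis Hd : forall k, mu (sd A (mem (gk k))) < rad (Tf k) k (ak k).

Lemma err k t : (length t <= depth (Tf k) + 2 * k + ak k + 2)%nat -> Rabs (dens A t - val (sub (gk k) t)) <= h k.
Proof.
  intros Hl. rewrite <- dens_mem. eapply Rle_trans. apply dens_err.
  pose proof (Hd k) as H. unfold rad in H. pose proof (h_pos (length t)).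
  replace (depth (Tf k) + 3 * k + ak k + 2)%nat with (length t + (depth (Tf k) + 3 * k + ak k + 2 - length t))%nat in H by lia.
  rewrite h_add in H. pose proof (h_mono k (depth (Tf k) + 3 * k + ak k + 2 - length t) ltac:(lia)).
  apply Rcomplements.Rle_div_l. auto. rewrite Rmult_comm. apply Rlt_le. eapply Rlt_le_trans. exact H.
  apply Rmult_le_compat_l. lra. auto.
Qed.

Definition kof (n : nat) (u : list bool) (e : option nat) : nat :=
  (length u + n + 3 + match e with Some m => m | None => 0 end)%nat.

Definition gspec (k : nat) (u p : list bool) : Prop :=
  sub (gk k) (u ++ p) = gad k (ak k) /\ (k <= length (u ++ p))%nat /\
  (length (u ++ p) <= depth (Tf k) + k)%nat /\ TP (sub (gk k) u) p (val (sub (gk k) u)).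

Definition gp (k : nat) (u : list bool) : list bool := epsilon (inhabits nil) (gspec k u).

Definition step (n : nat) (u : list bool) (e : option nat) : list bool :=
  let k := kof n u e in
  let s := u ++ gp k u in
  match e with None => s | Some m => s ++ dp m (ak k) end.

Fixpoint U (ev : nat -> option nat) (n : nat) : list bool :=
  match n with 0%nat => nil | S n => step n (U ev n) (ev n) end.

Lemma gp_spec k u : (length u <= k)%nat -> 0 < val (sub (gk k) u) -> gspec k u (gp k u).
Proof.
  intros H1 H2. unfold gp. apply epsilon_spec. unfold gspec, gk. apply greedy; auto.
Qed.

Lemma step_props n u e :
  let k := kof n u e in
  0 < val (sub (gk k) u) ->
  exists w, step n u e = u ++ w /\ (length u < length (u ++ w))%nat /\
    TP (sub (gk k) u) w (match e with None => val (sub (gk k) u) | Some m => Rmin (val (sub (gk k) u)) (1 - h (S m)) end) /\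
    1 - 2 * h k <= dens A (u ++ w) /\
    (length (u ++ w) <= depth (Tf k) + 2 * k + ak k + 2)%nat /\
    (forall m, e = Some m -> exists v, (length u <= length (u ++ v))%nat /\ (exists v', w = v ++ v') /\ dens A (u ++ v) <= 1 - h (S m) + h k).
Proof.
  intros k Hv.
  assert (Hk : (length u <= k)%nat) by (unfold k, kof; lia).
  assert (Hk2 : (length u < k)%nat) by (unfold k, kof; lia).
  destruct (gp_spec k u Hk Hv) as [G1 [G2 [G3 G4]]].
  set (p := gp k u) in *.
  assert (Hak : (k <= ak k)%nat) by (unfold ak; lia).
  assert (Hga : 1 - h (S (ak k)) <= val (gad k (ak k))) by apply val_gad_ge.
  assert (Hh1 : h (S (ak k)) <= h k) by (apply h_mono; lia).
  destruct e as [m|].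
  - assert (Hm : (m + 3 <= k)%nat) by (unfold k, kof; lia).
    exists (p ++ dp m (ak k)). unfold step. fold k. fold p. rewrite app_assoc. split. reflexivity.
    assert (Hlen : length (dp m (ak k)) = (m + 1 + ak k + 1)%nat).
    { unfold dp, dn. rewrite !length_app, repeat_length. simpl. rewrite repeat_length. lia. }
    split. rewrite length_app. lia.
    split.
    + apply TP_app. eapply TP_mono. 2: exact G4. apply Rmin_l.
      rewrite <- sub_app, G1. eapply TP_mono. 2: apply TP_gad_dp; lia. apply Rmin_r.
    + split.
      * pose proof (err k ((u ++ p) ++ dp m (ak k))) as E.
        rewrite sub_app, G1, sub_gad_dp in E by lia. simpl val in E.
        rewrite length_app, Hlen in E. specialize (E ltac:(lia)). apply abs_le in E.
        pose proof (h_pos k). lra.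
      * split. rewrite length_app, Hlen. lia.
        intros m' Hm'. injection Hm' as <-. exists (p ++ dn m (ak k)). split. rewrite !length_app. lia.
        split. exists (true :: nil). unfold dp. rewrite app_assoc. reflexivity.
        pose proof (err k ((u ++ p) ++ dn m (ak k))) as E. rewrite app_assoc.
        rewrite sub_app, G1, sub_gad_dn in E by lia. rewrite val_rt in E.
        assert (length (dn m (ak k)) = (m + 1 + ak k)%nat).
        { unfold dn. rewrite length_app, repeat_length. simpl. rewrite repeat_length. lia. }
        rewrite length_app in E. specialize (E ltac:(lia)). apply abs_le in E. lra.
  - exists p. unfold step. fold k. fold p. split. reflexivity. split. lia. split. exact G4.
    split.
    + pose proof (err k (u ++ p)) as E. rewrite G1 in E. specialize (E ltac:(lia)). apply abs_le in E. lra.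
    + split. lia. intros m' Hm'. discriminate.
Qed.

Definition kn (ev : nat -> option nat) (n : nat) : nat := kof n (U ev n) (ev n).

Lemma val_gk_pos k : 0 < val (gk k).
Proof.
  unfold gk. rewrite val_gtr. pose proof (val_gad_ge k (ak k)). pose proof (h_le1 (ak k)).
  rewrite h_S in H. apply Rmult_lt_0_compat. apply Hpos. lra.
Qed.

Lemma inv_pos ev n : (n <= length (U ev n))%nat /\ ((0 < n)%nat -> 1 - 2 * h (n + 2) <= dens A (U ev n)) /\
  0 < val (sub (gk (kn ev n)) (U ev n)).
Proof.
  assert (pos : forall n, ((0 < n)%nat -> 1 - 2 * h (n + 2) <= dens A (U ev n)) -> 0 < val (sub (gk (kn ev n)) (U ev n))).
  { intros n' H. destruct n'.
    - simpl. apply val_gk_pos.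
    - specialize (H ltac:(lia)). set (k := kn ev (S n')).
      assert (Hl : (length (U ev (S n')) <= k)%nat) by (unfold k, kn, kof; lia).
      pose proof (err k (U ev (S n')) ltac:(lia)) as E. apply abs_le in E.
      pose proof (h_mono 3 (S n' + 2) ltac:(lia)). pose proof (h_mono 3 k ltac:(unfold k, kn, kof; lia)).
      assert (h 3 = /8) by (unfold h; simpl; field). lra. }
  induction n.
  - split. lia. split. lia. apply pos. lia.
  - destruct IHn as [I1 [I2 I3]].
    destruct (step_props n (U ev n) (ev n) I3) as [w [S1 [S2 [_ [S4 _]]]]].
    assert (Inv : (S n <= length (U ev (S n)))%nat /\ ((0 < S n)%nat -> 1 - 2 * h (S n + 2) <= dens A (U ev (S n)))).
    { simpl U. rewrite S1. split. lia. intros _.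
      pose proof (h_mono (S n + 2) (kof n (U ev n) (ev n)) ltac:(unfold kof; lia)). lra. }
    destruct Inv as [J1 J2]. split; [exact J1|]. split; [exact J2|]. apply pos. exact J2.
Qed.

Lemma seg_bound ev n l : (length (U ev n) <= l <= length (U ev (S n)))%nat ->
  let k := kn ev n in
  (match ev n with None => val (sub (gk k) (U ev n)) | Some m => Rmin (val (sub (gk k) (U ev n))) (1 - h (S m)) end) - h k
    <= dens A (firstn l (U ev (S n))).
Proof.
  intros Hl. unfold kn. destruct (inv_pos ev n) as [_ [_ P]]. unfold kn in P.
  destruct (step_props n (U ev n) (ev n) P) as [w [S1 [S2 [S3 [S4 [S5 _]]]]]].
  simpl U in *. rewrite S1 in *. set (k := kof n (U ev n) (ev n)) in *.
  rewrite firstn_app. replace (firstn l (U ev n)) with (U ev n) by (symmetry; apply firstn_all2; lia).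
  pose proof (S3 (l - length (U ev n))%nat ltac:(rewrite length_app in Hl; lia)) as T.
  rewrite <- sub_app in T.
  assert (E := err k (U ev n ++ firstn (l - length (U ev n)) w)).
  rewrite length_app, firstn_length in E. rewrite length_app in S5.
  specialize (E ltac:(lia)). apply abs_le in E. lra.
Qed.

Lemma val_u_ge ev n : dens A (U ev n) - h (kn ev n) <= val (sub (gk (kn ev n)) (U ev n)).
Proof.
  pose proof (err (kn ev n) (U ev n) ltac:(unfold kn, kof; lia)) as E. apply abs_le in E. lra.
Qed.

Lemma dip ev n m : ev n = Some m -> exists t, (length (U ev n) <= length t)%nat /\
  (exists v, U ev (S n) = t ++ v) /\ dens A t <= 1 - h (S m) + h (kn ev n).
Proof.
  intros Hm. destruct (inv_pos ev n) as [_ [_ P]].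
  destruct (step_props n (U ev n) (ev n) P) as [w [S1 [_ [_ [_ [_ S6]]]]]].
  destruct (S6 m Hm) as [v [V1 [[v' V2] V3]]]. exists (U ev n ++ v). split; auto.
  split. exists v'. simpl U. rewrite S1, V2, app_assoc. reflexivity. exact V3.
Qed.

Lemma U_prefix ev n m : (n <= m)%nat -> exists v, U ev m = U ev n ++ v.
Proof.
  induction 1. exists nil. rewrite app_nil_r. reflexivity.
  destruct IHle as [v Hv]. destruct (inv_pos ev m) as [_ [_ P]].
  destruct (step_props m (U ev m) (ev m) P) as [w [S1 _]].
  exists (v ++ w). simpl U. rewrite S1, Hv, app_assoc. reflexivity.
Qed.

Definition zf (ev : nat -> option nat) : cantor := fun i => nth i (U ev (S i)) false.

Lemma zf_prefix ev n l : (l <= length (U ev n))%nat -> prefix (zf ev) l = firstn l (U ev n).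
Proof.
  intros Hl. rewrite <- map_nth_firstn by auto. unfold prefix. apply map_ext_in.
  intros i Hi. apply in_seq in Hi. unfold zf.
  destruct (U_prefix ev n (max n (S i)) ltac:(lia)) as [v1 E1].
  destruct (U_prefix ev (S i) (max n (S i)) ltac:(lia)) as [v2 E2].
  assert (H1 : nth i (U ev (max n (S i))) false = nth i (U ev n) false).
  { rewrite E1. apply app_nth1. lia. }
  assert (H2 : nth i (U ev (max n (S i))) false = nth i (U ev (S i)) false).
  { rewrite E2. apply app_nth1. destruct (inv_pos ev (S i)) as [J _]. lia. }
  congruence.
Qed.

Lemma core_equiv ev : EvInf ev <-> Phi A (zf ev).
Proof.
  unfold Phi. split.
  - intros HE. apply is_lim_seq_spec. intros eps.
    destruct (h_small (eps / 4)) as [M HM]. destruct eps as [eps He]. simpl in *. lra.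
    destruct (HE M) as [N HN].
    set (N' := (N + M + 1)%nat).
    exists (length (U ev N')). intros l Hl.
    rewrite ratio_dens.
    destruct (seg_lemma (fun n => length (U ev n)) (fun n => proj1 (inv_pos ev n)) N' l Hl) as [n [Hn1 [Hn2 Hn3]]].
    rewrite (zf_prefix ev (S n) l Hn3).
    pose proof (seg_bound ev n l (conj Hn2 Hn3)) as B. cbv zeta in B.
    pose proof (val_u_ge ev n) as V. destruct (inv_pos ev n) as [_ [I2 _]]. specialize (I2 ltac:(unfold N' in *; lia)).
    pose proof (dens_le1 A (firstn l (U ev (S n)))).
    pose proof (h_mono M (n + 2) ltac:(unfold N' in *; lia)).
    pose proof (h_mono M (kn ev n) ltac:(unfold kn, kof, N' in *; lia)).
    pose proof (h_pos M). pose proof (cond_pos eps).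
    apply Rabs_def1. lra.
    destruct (ev n) as [m|] eqn:Em; rewrite ?Em in B.
    + pose proof (HN n ltac:(unfold N' in *; lia) m Em). pose proof (h_mono M (S m) ltac:(lia)).
      pose proof (Rmin_l (val (sub (gk (kn ev n)) (U ev n))) (1 - h (S m))).
      pose proof (Rmin_r (val (sub (gk (kn ev n)) (U ev n))) (1 - h (S m))).
      destruct (Rle_dec (val (sub (gk (kn ev n)) (U ev n))) (1 - h (S m))).
      * rewrite Rmin_left in B by auto. lra.
      * rewrite Rmin_right in B by lra. lra.
    + lra.
  - intros HP. apply NNPP. intros HE. unfold EvInf in HE.
    apply not_all_ex_not in HE. destruct HE as [M HM].
    apply is_lim_seq_spec in HP.
    destruct (HP (mkposreal (h (M + 2)) (h_pos _))) as [N0 HN0]. simpl in HN0.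
    apply HM. exists (N0 + M)%nat. intros n Hn m Hm. apply NNPP. intros Hmm.
    destruct (dip ev n m Hm) as [t [T1 [[v T2] T3]]].
    assert (Hlt : (length t <= length (U ev (S n)))%nat) by (rewrite T2, length_app; lia).
    specialize (HN0 (length t) ltac:(destruct (inv_pos ev n) as [J _]; lia)).
    rewrite ratio_dens, (zf_prefix ev (S n) _ Hlt) in HN0.
    rewrite T2, firstn_app, Nat.sub_diag, firstn_all, app_nil_r in HN0.
    apply Rabs_def2 in HN0.
    pose proof (h_mono (S m) (S M) ltac:(lia)).
    pose proof (h_mono (M + 3) (kn ev n) ltac:(unfold kn, kof; lia)).
    assert (h (M + 3) = h (S M) / 4) by (replace (M + 3)%nat with (S (S (S M))) by lia; rewrite !h_S; field).
    assert (h (M + 2) = h (S M) / 2) by (replace (M + 2)%nat with (S (S M)) by lia; rewrite !h_S; field).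
    pose proof (h_pos (S M)). lra.
Qed.

End Core.

Lemma U_ext Tf qf ev ev' n : (forall j, (j < n)%nat -> ev j = ev' j) -> U Tf qf ev n = U Tf qf ev' n.
Proof.
  induction n; intros H. reflexivity. simpl. rewrite IHn by (intros; apply H; lia). rewrite H by lia. reflexivity.
Qed.

Lemma zf_ext Tf qf ev ev' i : (forall j, (j <= i)%nat -> ev j = ev' j) -> zf Tf qf ev i = zf Tf qf ev' i.
Proof. intros H. unfold zf. rewrite (U_ext Tf qf ev ev') by (intros; apply H; lia). reflexivity. Qed.

Lemma prefix_firstn x m n : (m <= n)%nat -> prefix x m = firstn m (prefix x n).
Proof.
  intros H. unfold prefix. replace n with (m + (n - m))%nat by lia. rewrite seq_app, map_app.
  rewrite firstn_app. rewrite length_map, length_seq, Nat.sub_diag. simpl. rewrite app_nil_r.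
  rewrite firstn_all2. reflexivity. rewrite length_map, length_seq. lia.
Qed.

Lemma prefix_eq_le x y m n : (m <= n)%nat -> prefix x n = prefix y n -> prefix x m = prefix y m.
Proof. intros H E. rewrite (prefix_firstn x m n H), (prefix_firstn y m n H), E. reflexivity. Qed.

Lemma N_prefix x y n : Nb (prefix x n) y -> prefix y n = prefix x n.
Proof. unfold Defs.N. rewrite prefix_length. auto. Qed.

Fixpoint lfind (P : nat -> Prop) (n : nat) : nat :=
  match n with
  | 0%nat => 0%nat
  | S n => let r := lfind P n in
           if Nat.ltb r n then r else if excluded_middle_informative (P n) then n else S n
  end.

Lemma lf_spec P n : (lfind P n <= n)%nat /\ (forall i, (i < lfind P n)%nat -> ~ P i) /\
  ((lfind P n < n)%nat -> P (lfind P n)).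
Proof.
  induction n as [|n [I1 [I2 I3]]]. simpl. repeat split; intros; lia.
  simpl. destruct (Nat.ltb_spec (lfind P n) n).
  - split. lia. split. auto. intros _. auto.
  - assert (lfind P n = n) by lia. destruct (excluded_middle_informative (P n)).
    + split. lia. split. intros i Hi. apply I2. lia. intros _. auto.
    + split. lia. split. intros i Hi. destruct (Nat.eq_dec i n). subst; auto. apply I2. lia.
      intros Hc; lia.
Qed.

Lemma lf_le_wit P n i : (i < n)%nat -> P i -> (lfind P n <= i)%nat.
Proof.
  intros H1 H2. destruct (lf_spec P n) as [_ [S2 _]]. destruct (Compare_dec.le_lt_dec (lfind P n) i); auto.
  exfalso. apply (S2 i); auto.
Qed.

Lemma lf_ge P n g : (g <= n)%nat -> (forall i, (i < g)%nat -> ~ P i) -> (g <= lfind P n)%nat.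
Proof.
  intros H1 H2. destruct (lf_spec P n) as [S1 [_ S3]]. destruct (Compare_dec.le_lt_dec g (lfind P n)); auto.
  exfalso. apply (H2 (lfind P n)); auto. apply S3. lia.
Qed.

Section Red.
Variable F : nat -> nat -> cantor -> Prop.
Hypothesis Fcl : forall m k, Defs.closed_set (F m k).

Definition meets (m k : nat) (t : list bool) : Prop := exists y, Nb t y /\ F m k y.
Definition Gm (m : nat) (x : cantor) (n : nat) : nat := lfind (fun k => meets m k (prefix x n)) n.
Definition chb (m : nat) (x : cantor) (n : nat) : bool := negb (Nat.eqb (Gm m x (S n)) (Gm m x n)).
Definition evx (x : cantor) (n : nat) : option nat :=
  let j := lfind (fun m => chb m x n = true) (S n) in if Nat.ltb j (S n) then Some j else None.

Lemma meets_mono m k x n : meets m k (prefix x (S n)) -> meets m k (prefix x n).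
Proof.
  intros [y [Hy Hf]]. exists y. split; auto. apply N_prefix in Hy. unfold Defs.N. rewrite prefix_length.
  apply (prefix_eq_le y x n (S n)); auto.
Qed.

Lemma meets_mono' m k x n n' : (n <= n')%nat -> meets m k (prefix x n') -> meets m k (prefix x n).
Proof. induction 1; auto. intros H'. apply IHle. apply meets_mono. auto. Qed.

Lemma Gm_mono m x n : (Gm m x n <= Gm m x (S n))%nat.
Proof.
  unfold Gm. apply lf_ge. destruct (lf_spec (fun k => meets m k (prefix x n)) n) as [S1 _]. lia.
  intros i Hi Hm. destruct (lf_spec (fun k => meets m k (prefix x n)) n) as [_ [S2 _]].
  apply (S2 i Hi). apply meets_mono. auto.
Qed.

Lemma Gm_mono' m x n n' : (n <= n')%nat -> (Gm m x n <= Gm m x n')%nat.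
Proof. induction 1. lia. pose proof (Gm_mono m x m0). lia. Qed.

Lemma ev_const (g : nat -> nat) : (forall n, (g n <= g (S n))%nat) ->
  forall d n0 K, (forall n, (n0 <= n)%nat -> (g n <= K)%nat) -> (K - g n0 <= d)%nat ->
  exists N, forall n, (N <= n)%nat -> g n = g N.
Proof.
  intros Hm. assert (Hm' : forall n n', (n <= n')%nat -> (g n <= g n')%nat).
  { induction 1. lia. pose proof (Hm m). lia. }
  induction d; intros n0 K HK Hd.
  - exists n0. intros n Hn. pose proof (Hm' _ _ Hn). pose proof (HK n Hn). pose proof (HK n0 (le_n _)). lia.
  - destruct (classic (forall n, (n0 <= n)%nat -> g n = g n0)) as [H|H]. exists n0. auto.
    apply not_all_ex_not in H. destruct H as [n1 H]. apply imply_to_and in H. destruct H as [H1 H2].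
    pose proof (Hm' _ _ H1). pose proof (HK n1 H1).
    apply (IHd n1 K). intros n Hn. apply HK. lia. lia.
Qed.

Lemma Gm_const_iff m x : (exists N, forall n, (N <= n)%nat -> Gm m x n = Gm m x N) <-> exists k, F m k x.
Proof.
  split.
  - intros [N HN]. set (c := Gm m x N). exists c.
    assert (Hme : forall n, meets m c (prefix x n)).
    { intros n. set (n1 := (N + S c + n)%nat). apply (meets_mono' m c x n n1). unfold n1; lia.
      pose proof (HN n1 ltac:(unfold n1; lia)) as E. fold c in E.
      destruct (lf_spec (fun k => meets m k (prefix x n1)) n1) as [_ [_ S3]].
      unfold Gm in E. rewrite E in S3. apply S3. unfold n1; lia. }
    apply NNPP. intros Hn. destruct (Fcl m c x Hn) as [n Hop].
    destruct (Hme n) as [y [Hy Hf]]. apply (Hop y Hy Hf).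
  - intros [k Hk]. apply (ev_const (Gm m x) (Gm_mono m x) k (S k) k).
    intros n Hn. unfold Gm. apply lf_le_wit. lia. exists x. split; auto. unfold Defs.N. rewrite prefix_length. reflexivity.
    lia.
Qed.

Lemma evinf_iff x : EvInf (evx x) <-> forall m, exists k, F m k x.
Proof.
  split.
  - intros HE m. apply Gm_const_iff. destruct (HE m) as [N HN].
    set (N' := (N + m)%nat). exists N'.
    assert (Hs : forall n, (N' <= n)%nat -> Gm m x (S n) = Gm m x n).
    { intros n Hn. destruct (Nat.eq_dec (Gm m x (S n)) (Gm m x n)) as [E|E]; auto. exfalso.
      assert (Hc : chb m x n = true) by (unfold chb; apply Bool.negb_true_iff, Nat.eqb_neq; auto).
      pose proof (lf_le_wit (fun j => chb j x n = true) (S n) m ltac:(unfold N' in Hn; lia) Hc) as L.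
      specialize (HN n ltac:(unfold N' in Hn; lia) (lfind (fun j => chb j x n = true) (S n))).
      unfold evx in HN. destruct (Nat.ltb_spec (lfind (fun m => chb m x n = true) (S n)) (S n)).
      specialize (HN eq_refl). lia. lia. }
    assert (Hd : forall d, Gm m x (N' + d) = Gm m x N').
    { induction d. rewrite Nat.add_0_r. auto. rewrite Nat.add_succ_r, Hs. auto. lia. }
    intros n Hn. replace n with (N' + (n - N'))%nat by lia. apply Hd.
  - intros HF M.
    assert (HA : forall M, exists N, forall m n, (m <= M)%nat -> (N <= n)%nat -> chb m x n = false).
    { induction M0.
      - destruct (proj2 (Gm_const_iff 0 x) (HF 0%nat)) as [N HN]. exists N. intros m n Hm Hn.
        replace m with 0%nat by lia. unfold chb. rewrite (HN (S n)), (HN n) by lia. rewrite Nat.eqb_refl. reflexivity.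
      - destruct IHM0 as [N1 HN1]. destruct (proj2 (Gm_const_iff (S M0) x) (HF (S M0))) as [N2 HN2].
        exists (N1 + N2)%nat. intros m n Hm Hn. destruct (Nat.eq_dec m (S M0)).
        + subst. unfold chb. rewrite (HN2 (S n)), (HN2 n) by lia. rewrite Nat.eqb_refl. reflexivity.
        + apply HN1; lia. }
    destruct (HA M) as [N HN]. exists N. intros n Hn m Hm. unfold evx in Hm.
    destruct (lf_spec (fun m => chb m x n = true) (S n)) as [_ [_ S3]].
    destruct (Nat.ltb_spec (lfind (fun m => chb m x n = true) (S n)) (S n)); [|discriminate].
    assert (Hm' : lfind (fun m => chb m x n = true) (S n) = m) by congruence. clear Hm.
    specialize (S3 H). rewrite Hm' in S3.
    destruct (Compare_dec.le_lt_dec m M); auto. rewrite HN in S3 by lia. discriminate.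
Qed.

Lemma evx_cont x y n : prefix x (S n) = prefix y (S n) -> evx x n = evx y n.
Proof.
  intros E. assert (E' : prefix x n = prefix y n) by (apply (prefix_eq_le x y n (S n)); auto).
  unfold evx, chb, Gm. rewrite E, E'. reflexivity.
Qed.
End Red.

Lemma Phi_Fsd A : Fsigmadelta (Phi A).
Proof.
  exists (fun m k x => forall n, (k <= n)%nat -> 1 - h m <= dens A (prefix x n)). split.
  - intros m k x Hx. apply not_all_ex_not in Hx. destruct Hx as [n Hn].
    apply imply_to_and in Hn. destruct Hn as [Hkn Hd]. exists n. intros y Hy Hf.
    apply Hd. apply N_prefix in Hy. rewrite <- Hy. apply Hf. auto.
  - intros x. unfold Phi. split.
    + intros HP m. apply is_lim_seq_spec in HP. destruct (HP (mkposreal (h m) (h_pos m))) as [N HN].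
      exists N. intros n Hn. specialize (HN n Hn). simpl in HN. rewrite ratio_dens in HN.
      apply Rabs_def2 in HN. lra.
    + intros HF. apply is_lim_seq_spec. intros eps. destruct (h_small eps (cond_pos eps)) as [m Hm].
      destruct (HF m) as [k Hk]. exists k. intros n Hn. rewrite ratio_dens.
      pose proof (Hk n Hn). pose proof (dens_le1 A (prefix x n)). apply Rabs_def1; lra.
Qed.

Lemma Phi_complete A (Tf : nat -> tree) (qf : nat -> nat) :
  (forall k, 0 < val (Tf k)) -> (forall k, mu (sd A (mem (gk Tf qf k))) < rad (Tf k) k (ak qf k)) ->
  complete_Pi03 (Phi A).
Proof.
  intros Hpos Hd. split. apply Phi_Fsd.
  intros B [F [Fcl HB]].
  exists (fun x => zf Tf qf (evx F x)). split.
  - intros x i. exists (S i). intros y Hy. apply N_prefix in Hy.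
    apply zf_ext. intros j Hj. apply evx_cont. apply (prefix_eq_le y x (S j) (S i)); auto. lia.
  - intros x. rewrite HB, <- (evinf_iff F Fcl x). apply core_equiv; auto.
Qed.

Definition Dk (k : nat) (a : MALGpt) : Prop :=
  exists T q, 0 < val T /\ mu (sd (proj1_sig a) (mem (gtr k (k + q) T))) < rad T k (k + q).

Lemma Dk_open k : malg_open (Dk k).
Proof.
  intros a [T [q [HT Hd]]]. exists (rad T k (k + q) - mu (sd (proj1_sig a) (mem (gtr k (k + q) T)))).
  split. lra. intros b Hb. exists T, q. split; auto.
  pose proof (sd_tri (proj1_sig b) (proj1_sig a) (mem (gtr k (k + q) T))).
  unfold delta in Hb. fold (sd (proj1_sig a) (proj1_sig b)) in Hb. rewrite sd_sym in Hb. lra.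
Qed.

Lemma Dk_dense k : malg_dense (Dk k).
Proof.
  intros [A HA] eps He. simpl.
  destruct (approx A (eps / 3) HA ltac:(lra)) as [T0 H0].
  destruct (h_small (eps / 3) ltac:(lra)) as [p Hp].
  destruct (h_small (eps / 3) ltac:(lra)) as [q Hq].
  set (T := tor T0 (bt (repeat false p))).
  assert (HNT : forall x, Nb (repeat false p) x -> mem T x).
  { intros x Hx. unfold T. apply mem_tor. right. apply mem_bt. auto. }
  assert (H1 : mu (sd (mem T0) (mem T)) <= h p).
  { rewrite <- (repeat_length false p), <- mu_N. apply mu_mono. intros x Hx. unfold sd, T in Hx.
    rewrite mem_tor, mem_bt in Hx. tauto. }
  assert (HvT : 0 < val T).
  { rewrite <- mu_mem. eapply Rlt_le_trans. 2: apply (mu_mono _ _ HNT). rewrite mu_N, repeat_length. apply h_pos. }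
  set (g := gtr k (k + q) T).
  assert (H2 : mu (sd (mem T) (mem g)) <= h q).
  { rewrite (mu_ext (sd (mem T) (mem g)) (fun x => mem T x /\ ~ mem g x)).
    2: { intros x. unfold sd. pose proof (mem_gtr_sub k (k + q) T x). tauto. }
    pose proof (meas_mem g (mem T)) as C.
    rewrite (mu_ext (fun x => mem T x /\ mem g x) (mem g)) in C.
    2: { intros x. pose proof (mem_gtr_sub k (k + q) T x). tauto. }
    rewrite !mu_mem in C. unfold g in C. rewrite val_gtr in C.
    pose proof (val_gad_ge k (k + q)). pose proof (h_mono q (S (k + q)) ltac:(lia)).
    assert (val T <= 1) by (rewrite <- mu_mem, <- mu_full; apply mu_mono; auto).
    pose proof (val_gad_le k (k + q)). unfold g. nra. }
  exists (exist _ (mem g) (meas_mem g)). split.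
  - exists T, q. split; auto. simpl. fold g. rewrite sd_self. apply h_pos.
  - unfold delta. simpl. fold (sd A (mem g)).
    pose proof (sd_tri A (mem T0) (mem g)). pose proof (sd_tri (mem T0) (mem T) (mem g)). lra.
Qed.

Theorem theorem1p7 :
  malg_comeager (fun a : MALGpt => complete_Pi03 (Phi (proj1_sig a))).
Proof.
  exists Dk. split.
  - intros k. split. apply Dk_open. apply Dk_dense.
  - intros a Ha.
    assert (Hc : forall k, exists p : tree * nat, 0 < val (fst p) /\
       mu (sd (proj1_sig a) (mem (gtr k (k + snd p) (fst p)))) < rad (fst p) k (k + snd p)).
    { intros k. destruct (Ha k) as [T [q H]]. exists (T, q). exact H. }
    set (pf := fun k => proj1_sig (constructive_indefinite_description _ (Hc k))).
    apply (Phi_complete _ (fun k => fst (pf k)) (fun k => snd (pf k))).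
    + intros k. apply (proj2_sig (constructive_indefinite_description _ (Hc k))).
    + intros k. apply (proj2_sig (constructive_indefinite_description _ (Hc k))).
Qed.
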